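(* Let $R$ be an associative ring with unity and let $K$ be a class of left $R$-modules closed under finite direct sums, pure submodules and isomorphisms. The following are equivalent: (1) $K$ is closed under pushouts of pure embeddings in $R$-Mod, i.e. whenever $M,N_1,N_2\in K$ and $f_1:M\to N_1$, $f_2:M\to N_2$ are pure embeddings, the pushout $(N_1\oplus N_2)/\{(f_1(m),-f_2(m)):m\in M\}$ belongs to $K$; (2) $K$ is closed under pure epimorphic images.
   Context: A pure embedding is an injective homomorphism whose image is a pure submodule (every pp-formula with parameters in the image true in the codomain is true in the image). A pure epimorphism is a surjective homomorphism whose kernel is a pure submodule; $K$ is closed under pure epimorphic images if whenever $B\in K$ and $B\to C$ is a pure epimorphism, $C\in K$. *)

(* Defs.v *)
From HB Require Import structures.
From mathcomp Require Import all_boot all_order all_algebra.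
Set Implicit Arguments. Unset Strict Implicit. Unset Printing Implicit Defensive.
Import GRing.Theory.
Local Open Scope ring_scope.

(* The pp-formula  phi(x) := exists y, A x + B y = 0  (a finite system of
   R-linear equations), evaluated in M at the tuple a with witnesses b. *)
Definition pp_eqs (R : pzRingType) (M : lmodType R) (k n m : nat)
  (A : 'M[R]_(k, n)) (B : 'M[R]_(k, m)) (a : 'I_n -> M) (b : 'I_m -> M) : Prop :=
  forall i : 'I_k, \sum_(j < n) A i j *: a j + \sum_(l < m) B i l *: b l = 0.

Definition pure_in (R : pzRingType) (M : lmodType R) (S : M -> Prop) : Prop :=
  forall (k n m : nat) (A : 'M[R]_(k, n)) (B : 'M[R]_(k, m)) (a : 'I_n -> M),
    (forall j, S (a j)) ->
    (exists b : 'I_m -> M, pp_eqs A B a b) ->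
    exists b : 'I_m -> M, (forall l, S (b l)) /\ pp_eqs A B a b.

Definition pure_embedding (R : pzRingType) (M N : lmodType R)
  (f : {linear M -> N}) : Prop :=
  injective f /\ pure_in (fun y : N => exists x : M, f x = y).

Definition pure_epimorphism (R : pzRingType) (B C : lmodType R)
  (g : {linear B -> C}) : Prop :=
  (forall c : C, exists b : B, g b = c) /\ pure_in (fun x : B => g x = 0).

Definition mod_class (R : pzRingType) := lmodType R -> Prop.

Definition closed_iso (R : pzRingType) (K : mod_class R) : Prop :=
  forall (M N : lmodType R) (f : {linear M -> N}), bijective f -> K M -> K N.

Definition closed_dsum (R : pzRingType) (K : mod_class R) : Prop :=
  forall M N : lmodType R, K M -> K N -> K (M * N)%type.

(* pure submodules, up to isomorphism: domains of pure embeddings into members *)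
Definition closed_pure_sub (R : pzRingType) (K : mod_class R) : Prop :=
  forall (N M : lmodType R) (f : {linear N -> M}), pure_embedding f -> K M -> K N.

Definition closed_pure_epi (R : pzRingType) (K : mod_class R) : Prop :=
  forall (B C : lmodType R) (g : {linear B -> C}), pure_epimorphism g -> K B -> K C.

(* P (via q) is the pushout (N1 (+) N2)/{(f1 m, - f2 m) : m in M}:
   q is surjective with kernel exactly that submodule. *)
Definition is_pushout_quotient (R : pzRingType) (M N1 N2 P : lmodType R)
  (f1 : {linear M -> N1}) (f2 : {linear M -> N2}) (q : {linear (N1 * N2)%type -> P})
  : Prop :=
  (forall p : P, exists x, q x = p) /\
  (forall x : (N1 * N2)%type, q x = 0 <-> exists m : M, x = (f1 m, - f2 m)).

Definition closed_pure_pushout (R : pzRingType) (K : mod_class R) : Prop :=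
  forall (M N1 N2 : lmodType R) (f1 : {linear M -> N1}) (f2 : {linear M -> N2}),
    K M -> K N1 -> K N2 -> pure_embedding f1 -> pure_embedding f2 ->
    forall (P : lmodType R) (q : {linear (N1 * N2)%type -> P}),
      is_pushout_quotient f1 f2 q -> K P.

(* Main.v *)
Require Import Defs.
From HB Require Import structures.
From mathcomp Require Import all_boot all_order all_algebra.
From Stdlib Require Import IndefiniteDescription.
Set Implicit Arguments. Unset Strict Implicit. Unset Printing Implicit Defensive.
Import GRing.Theory.
Local Open Scope ring_scope.

Section Ker.
Variables (R : pzRingType) (B C : lmodType R) (g : {linear B -> C}).
Definition kerS : pred B := fun x => g x == 0.
Lemma kerS_closed : subsemimod_closed kerS.
Proof.
apply: GRing.submod_closed_semi; split; first by rewrite /kerS unfold_in /= linear0.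
move=> a u v; rewrite !unfold_in /= => /eqP hu /eqP hv.
rewrite linearD linearZ /= hu hv.
by rewrite /= scaler0 addr0.
Qed.
Definition kerT := {x : B | kerS x}.
HB.instance Definition _ := [isSub of kerT for (@sval B kerS)].
HB.instance Definition _ := [Choice of kerT by <:].
HB.instance Definition _ := GRing.SubChoice_isSubLmodule.Build R B kerS kerT kerS_closed.

Definition qf (p : (B * B)%type) : (B * C)%type := (p.1 + p.2, g p.1).
Fact qf_lin : linear qf.
Proof.
move=> a [x1 y1] [x2 y2]; rewrite /qf /=.
rewrite linearD linearZ /=.
change (a *: (x1+y1, g x1) + (x2+y2, g x2)) with (a *: (x1+y1) + (x2+y2), a *: g x1 + g x2).
by rewrite scalerDr addrACA.
Qed.
HB.instance Definition _ := GRing.isLinear.Build R (B * B)%type (B * C)%type _ qf qf_lin.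
Lemma qfE p : (qf : {linear (B * B)%type -> (B * C)%type}) p = (p.1 + p.2, g p.1). Proof. by []. Qed.
End Ker.

Section Inr.
Variables (R : pzRingType) (B C : lmodType R).
Definition inrf (c : C) : (B * C)%type := (0, c).
Fact inrf_lin : linear inrf.
Proof.
move=> a x y; rewrite /inrf.
change (a *: (0 : B, x) + (0, y)) with (a *: (0:B) + 0, a *: x + y).
by rewrite scaler0 addr0.
Qed.
HB.instance Definition _ := GRing.isLinear.Build R C (B * C)%type _ inrf inrf_lin.
End Inr.

Lemma choice_fun (I T : Type) (P : I -> T -> Prop) :
  (forall i, exists t, P i t) -> exists f : I -> T, forall i, P i (f i).
Proof.
move=> H; exists (fun i => proj1_sig (constructive_indefinite_description _ (H i))).
by move=> i; case: (constructive_indefinite_description _ (H i)).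
Qed.

Section PP.
Variables (R : pzRingType).

Lemma pp_ext (M : lmodType R) k n m (A : 'M[R]_(k, n)) (Bm : 'M[R]_(k, m))
  (a a' : 'I_n -> M) (b b' : 'I_m -> M) :
  (forall j, a j = a' j) -> (forall l, b l = b' l) -> pp_eqs A Bm a b -> pp_eqs A Bm a' b'.
Proof.
move=> ea eb H i; apply: etrans (H i).
by congr (_ + _); apply: eq_bigr => j _; rewrite ?ea ?eb.
Qed.

Lemma pp_map (M N : lmodType R) (f : {linear M -> N}) k n m (A : 'M[R]_(k, n))
  (Bm : 'M[R]_(k, m)) (a : 'I_n -> M) (b : 'I_m -> M) i :
  f (\sum_(j < n) A i j *: a j + \sum_(l < m) Bm i l *: b l) =
  \sum_(j < n) A i j *: f (a j) + \sum_(l < m) Bm i l *: f (b l).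
Proof.
rewrite linearD !linear_sum; congr (_ + _); apply: eq_bigr => j _; exact: linearZ.
Qed.

Lemma pp_lin (M N : lmodType R) (f : {linear M -> N}) k n m (A : 'M[R]_(k, n))
  (Bm : 'M[R]_(k, m)) (a : 'I_n -> M) (b : 'I_m -> M) :
  pp_eqs A Bm a b -> pp_eqs A Bm (fun j => f (a j)) (fun l => f (b l)).
Proof. by move=> H i; rewrite -pp_map H linear0. Qed.

Lemma pp_inj (M N : lmodType R) (f : {linear M -> N}) k n m (A : 'M[R]_(k, n))
  (Bm : 'M[R]_(k, m)) (a : 'I_n -> M) (b : 'I_m -> M) :
  injective f -> pp_eqs A Bm (fun j => f (a j)) (fun l => f (b l)) -> pp_eqs A Bm a b.
Proof. by move=> fi H i; apply: fi; rewrite pp_map H linear0. Qed.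

Lemma pp_pair (M N : lmodType R) k n m (A : 'M[R]_(k, n))
  (Bm : 'M[R]_(k, m)) (a : 'I_n -> (M * N)%type) (b : 'I_m -> (M * N)%type) :
  pp_eqs A Bm (fun j => (a j).1) (fun l => (b l).1) ->
  pp_eqs A Bm (fun j => (a j).2) (fun l => (b l).2) -> pp_eqs A Bm a b.
Proof.
move=> H1 H2 i.
have e1 := pp_map fst A Bm a b i.
have e2 := pp_map snd A Bm a b i.
move: e1 e2; rewrite H1 H2.
case: (\sum_(j < n) A i j *: a j + \sum_(l < m) Bm i l *: b l) => x y /= -> -> //.
Qed.

Lemma pp_zero (M : lmodType R) k n m (A : 'M[R]_(k, n)) (Bm : 'M[R]_(k, m)) :
  pp_eqs A Bm (fun _ => (0 : M)) (fun _ => 0).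
Proof. by move=> i; rewrite !big1 ?addr0 // => j _; rewrite scaler0. Qed.
End PP.

Theorem lemma4p3 (R : pzRingType) (K : mod_class R)
  (Hsum : closed_dsum K) (Hpure : closed_pure_sub K) (Hiso : closed_iso K) :
  closed_pure_pushout K <-> closed_pure_epi K.
Proof.
split.
- move=> H1 B C g [gsurj gpure] KB.
  pose incl : {linear kerT g -> B} := val.
  have pe : pure_embedding incl.
    split; first exact: val_inj.
    move=> k n m A Bm a ha hb.
    have ha' : forall j, g (a j) = 0.
      by move=> j; case: (ha j) => x <-; apply/eqP; exact: (valP x).
    have [b [hbk hpp]] := gpure k n m A Bm a ha' hb.
    exists b; split => // l.
    have hl : kerS g (b l) by rewrite /kerS; apply/eqP.
    by exists (exist _ (b l) hl).
  have KM := Hpure _ _ incl pe KB.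
  have KBC : K (B * C)%type.
    apply: (H1 _ _ _ incl incl KM KB KB pe pe _ (qf g)).
    split.
      case=> b c; have [x hx] := gsurj c.
      by exists (x, b - x); rewrite qfE /= hx addrC subrK.
    case=> x y; rewrite qfE /=; split.
      case=> /addr0_eq hxy hgx.
      have hl : kerS g x by rewrite /kerS; apply/eqP.
      by exists (exist _ x hl); rewrite /= hxy.
    case=> mm [-> ->]; rewrite subrr; congr (_, _).
    by apply/eqP; exact: (valP mm).
  apply: (Hpure _ _ (@inrf R B C : {linear C -> (B * C)%type}) _ KBC); split.
    by move=> x y [].
  move=> k n m A Bm a ha [b hb].
  have [x hx] := choice_fun ha.
  exists (fun l => @inrf R B C (b l).2); split; first by move=> l; eexists.
  apply: pp_pair.
    apply: (@pp_ext _ _ _ _ _ A Bm (fun _ => 0) _ (fun _ => 0)) => //; last exact: pp_zero.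
    by move=> j; rewrite -hx.
  apply: (pp_ext _ _ (pp_lin snd hb)) => // j; by rewrite -hx.
- move=> H2 M N1 N2 f1 f2 KM KN1 KN2 [i1 p1] [i2 p2] P q [qsurj qker].
  apply: (H2 _ _ q _ (Hsum _ _ KN1 KN2)); split => //.
  move=> k n m A Bm a ha [b hb].
  have [mf hmf] := choice_fun (fun j => (qker (a j)).1 (ha j)).
  have h1 := pp_lin fst hb.
  have h1' : pp_eqs A Bm (fun j => f1 (mf j)) (fun l => (b l).1).
    by apply: (pp_ext _ _ h1) => // j; rewrite hmf.
  have [b1 [hb1 hpp1]] := p1 k n m A Bm (fun j => f1 (mf j)) (fun j => ex_intro _ _ erefl)
    (ex_intro _ _ h1').
  have [c hc] := choice_fun hb1.
  have hc' : pp_eqs A Bm mf c.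
    by apply: (pp_inj i1); apply: (pp_ext _ _ hpp1) => // l; rewrite hc.
  exists (fun l => (f1 (c l), - f2 (c l))); split.
    by move=> l; apply/(qker _).2; exists (c l).
  apply: pp_pair.
    by apply: (pp_ext _ _ (pp_lin f1 hc')) => // j; rewrite hmf.
  by apply: (pp_ext _ _ (pp_lin (\- f2) hc')) => // j; rewrite hmf.
Qed.
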